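(* For $n\ge 0$ let $s_n=\sum_{r=0}^{n}1/r!$ be the $n$th partial sum of the Taylor series $e=\sum_{r\ge 0}1/r!$. For every $n\ge 0$, at most two of the three numbers $s_n, s_{n+1}, s_{n+2}$ are convergents of the simple continued fraction expansion of $e$.
   Context: The convergents of $e$ are the rationals obtained by truncating the simple continued fraction expansion of $e$; a partial sum $s_n$ ''is a convergent'' if it equals one of these rationals. *)

(* Defs.v *)
From HB Require Import structures.
From mathcomp Require Import all_boot all_order all_algebra.
From mathcomp Require Import all_classical all_reals all_analysis.
Set Implicit Arguments. Unset Strict Implicit. Unset Printing Implicit Defensive.
Import Order.TTheory GRing.Theory Num.Theory.
Local Open Scope ring_scope.

Fixpoint cf_rem {R : realType} (x : R) (k : nat) : R :=
  match k with
  | 0%N => x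
  | k'.+1 => (cf_rem x k' - (Num.floor (cf_rem x k'))%:~R)^-1
  end.

Definition cf_digit {R : realType} (x : R) (k : nat) : int :=
  Num.floor (cf_rem x k).

(* ((p_{k-1}, q_{k-1}), (p_k, q_k)) with p_{-1} = 1, q_{-1} = 0,
   p_0 = a_0, q_0 = 1, p_{k+1} = a_{k+1} p_k + p_{k-1}, same for q. *)
Fixpoint cf_pq {R : realType} (x : R) (k : nat) : (int * int) * (int * int) :=
  match k with
  | 0%N => ((1, 0), (cf_digit x 0, 1))
  | k'.+1 =>
      let: ((pp, qp), (p, q)) := cf_pq x k' in
      let a := cf_digit x k in
      ((p, q), (a * p + pp, a * q + qp))
  end.

Definition cf_convergent {R : realType} (x : R) (k : nat) : R :=
  let: (_, (p, q)) := cf_pq x k in p%:~R / q%:~R.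

Definition is_convergent {R : realType} (x y : R) : Prop :=
  exists k : nat, y = cf_convergent x k.

Definition e_partial_sum {R : realType} (n : nat) : R :=
  \sum_(r < n.+1) (r`!%:R)^-1.

(* Main.v *)
Require Import Defs.
From mathcomp Require Import all_boot all_order all_algebra.
From mathcomp Require Import all_classical all_reals all_analysis.
From mathcomp Require Import lra zify ring.
Import Order.TTheory GRing.Theory Num.Theory.
Local Open Scope ring_scope.

Section CF.
Variable R : realType.

Definition irr (x : R) := forall p q : int, q != 0 -> x * q%:~R != p%:~R.

Lemma irr_frac (z : R) : irr z -> 0 < z - (Num.floor z)%:~R < 1.
Proof.
move=> hz; have /andP[h1 h2] := floor_itv z.
have hne : z - (Num.floor z)%:~R != 0.
  rewrite subr_eq0; have := hz (Num.floor z) 1 isT; by rewrite mulr1.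
apply/andP; split; first by rewrite lt_neqAle eq_sym hne subr_ge0.
by rewrite ltrBlDr addrC -[1]/(1%:~R) -intrD.
Qed.

Lemma irr_step (z : R) (m : int) : irr z -> irr ((z - m%:~R)^-1).
Proof.
move=> hz p q q0; apply/eqP => hE.
have hzm : z - m%:~R != 0.
  rewrite subr_eq0; have := hz m 1 isT; by rewrite mulr1.
have hq : q%:~R = p%:~R * (z - m%:~R) :> R.
  by rewrite -hE mulrC mulrA mulfV // mul1r.
have [p0|p0] := eqVneq p 0.
  by move: hq; rewrite p0 mul0r => /eqP; rewrite intr_eq0 (negPf q0).
have := hz (q + m * p) p p0; rewrite intrD intrM hq; apply/negP; rewrite negbK.
apply/eqP; ring.
Qed.

Variable x : R.
Hypothesis hx : irr x.

Lemma irr_rem k : irr (cf_rem x k).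
Proof. elim: k => [//|k IH] /=; exact: irr_step. Qed.

Lemma rem_gt1 k : 1 < cf_rem x k.+1.
Proof.
rewrite /=; have /andP[h1 h2] := @irr_frac _ (irr_rem k).
by rewrite invf_gt1.
Qed.

Lemma digit_ge1 k : 1 <= cf_digit x k.+1.
Proof. by rewrite /cf_digit floor_ge_int ltW // rem_gt1. Qed.

Lemma cf_inv k :
  let: ((pp, qp), (p, q)) := cf_pq x k in
  [/\ (p * qp - pp * q = 1) \/ (p * qp - pp * q = -1),
      x * (q%:~R * cf_rem x k.+1 + qp%:~R) = p%:~R * cf_rem x k.+1 + pp%:~R,
      1 <= q, 0 <= qp & (q == 1) || (1 <= qp)].
Proof.
elim: k => [|k IH].
  rewrite /=; split => //; first by right; rewrite mulr0 mulr1 sub0r.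
  rewrite mul1r addr0 /cf_digit /=.
  have hzm : x - (Num.floor x)%:~R != 0.
    rewrite subr_eq0; have := hx (Num.floor x) 1 isT; by rewrite mulr1.
  idtac.
  by rewrite -{1}(subrK (Num.floor x)%:~R x) mulrDl mulfV // addrC.
rewrite [cf_pq x k.+1]/=.
case: (cf_pq x k) IH => [[pp qp] [p q]] [hd hrel hq hqp hor].
set a := cf_digit x k.+1.
have ha : 1 <= a := digit_ge1 k.
set y := cf_rem x k.+1.
have hy' : cf_rem x k.+2 = (y - a%:~R)^-1 by [].
have hya : y - a%:~R != 0.
  rewrite subr_eq0; have := irr_rem k.+1 a 1 isT; by rewrite mulr1.
have hyy : y * cf_rem x k.+2 = a%:~R * cf_rem x k.+2 + 1.
  by rewrite hy' -{1}(subrK a%:~R y) mulrDl mulfV // addrC.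
split.
- case: hd => hd; [right; rewrite -hd | left; rewrite -[1]opprK -hd]; ring.
- have -> : ((a * q + qp)%:~R * cf_rem x k.+2 + q%:~R : R) =
            (q%:~R * y + qp%:~R) * cf_rem x k.+2.
    by rewrite mulrDl -mulrA hyy intrD intrM; ring.
  have -> : ((a * p + pp)%:~R * cf_rem x k.+2 + p%:~R : R) =
            (p%:~R * y + pp%:~R) * cf_rem x k.+2.
    by rewrite mulrDl -mulrA hyy intrD intrM; ring.
  by rewrite (mulrA x); congr (_ * _); exact: hrel.
- lia.
- lia.
- by rewrite hq orbT.
Qed.

Lemma conv_bound k : exists (p q c : int),
  [/\ cf_convergent x k = p%:~R / q%:~R, 1 <= q, 0 <= c, (q == 1) || (1 <= c)
    & `|x - p%:~R / q%:~R| * (q * (q + c))%:~R < 1].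
Proof.
have := cf_inv k; rewrite /cf_convergent.
case: (cf_pq x k) => [[pp qp] [p q]] [hd hrel hq hqp hor].
exists p, q, qp; split => //.
set y := cf_rem x k.+1.
have hy : 1 < y := rem_gt1 k.
have q0 : 0 < q%:~R :> R by rewrite ltr0z; lia.
have qp0 : 0 <= qp%:~R :> R by rewrite ler0z.
have hD : 0 < q%:~R * y + qp%:~R :> R by rewrite ltr_wpDr // mulr_gt0 // (lt_trans ltr01).
have hE : (x * q%:~R - p%:~R) * (q%:~R * y + qp%:~R) = (pp * q - p * qp)%:~R :> R.
  have h0 : x * (q%:~R * y + qp%:~R) - (p%:~R * y + pp%:~R) = 0.
    by apply/eqP; rewrite subr_eq0; apply/eqP; exact: hrel.
  rewrite intrB !intrM; apply/eqP; rewrite -subr_eq0; apply/eqP.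
  transitivity (q%:~R * (x * (q%:~R * y + qp%:~R) - (p%:~R * y + pp%:~R))); first ring.
  by rewrite h0 mulr0.
have hE1 : `|x * q%:~R - p%:~R| * (q%:~R * y + qp%:~R) = 1 :> R.
  rewrite -(ger0_norm (ltW hD)) -normrM hE.
  by rewrite -opprB intrN normrN; case: hd => ->; rewrite ?intrN ?normrN normr1.
have hpos : 0 < `|x * q%:~R - p%:~R| :> R.
  rewrite normr_gt0; apply/eqP => h; move: hE1; rewrite h normr0 mul0r => /eqP.
  by rewrite eq_sym oner_eq0.
have -> : x - p%:~R / q%:~R = (x * q%:~R - p%:~R) / q%:~R.
  by rewrite mulrBl -mulrA mulfV ?mulr1 // gt_eqF.
rewrite normrM normfV (gtr0_norm q0) intrM intrD.
rewrite mulrA -(mulrA _ _ q%:~R) mulVf ?gt_eqF // mulr1.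
rewrite -[X in _ < X]hE1 ltr_pM2l // ltrD2r.
by rewrite -{1}(mulr1 q%:~R) ltr_pM2l.
Qed.

End CF.

Fixpoint Nn (n : nat) : nat :=
  match n with 0 => 1 | k.+1 => (k.+1 * Nn k + 1)%N end.

Section E.
Variable R : realType.
Local Notation s := (@e_partial_sum R).
Local Notation e := (expR (1:R)).

Lemma sS n : s n.+1 = s n + (n.+1`!%:R)^-1.
Proof. by rewrite /e_partial_sum big_ord_recr. Qed.

Lemma fact_gt0R n : 0 < (n`!%:R : R).
Proof. by rewrite ltr0n fact_gt0. Qed.

Lemma sN n : s n = (Nn n)%:R / (n`!)%:R.
Proof.
elim: n => [|n IH]; first by rewrite /e_partial_sum big_ord1 /= divr1 invr1.
have h1 := fact_gt0R n.
rewrite sS IH /= factS !natrD !natrM.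
field; apply/andP; split; rewrite gt_eqF //; apply: (lt_le_trans h1); rewrite lerDl mulr_ge0 // ltW.
Qed.

Lemma s_ser n : s n = series (exp_coeff (1:R)) n.+1.
Proof.
rewrite /e_partial_sum /series /= big_mkord; apply: eq_bigr => i _.
by rewrite /exp_coeff /= expr1n mul1r.
Qed.

Lemma ser_nd : {homo series (exp_coeff (1:R)) : n m / (n <= m)%N >-> n <= m}.
Proof.
apply: nondecreasing_series => k _ _.
by rewrite /exp_coeff /= expr1n mul1r invr_ge0 ler0n.
Qed.

Lemma s_le_e n : s n <= e.
Proof.
rewrite s_ser; exact: (nondecreasing_cvgn_le ser_nd (is_cvg_series_exp_coeff _)).
Qed.

Lemma s_lt_e n : s n < e.
Proof.
apply: (lt_le_trans _ (s_le_e n.+1)); rewrite sS ltrDl invr_gt0.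
exact: fact_gt0R.
Qed.

Lemma tail n k : s (n + k) + 2 / ((n + k).+1`!)%:R <= s n + 2 / (n.+1`!)%:R.
Proof.
elim: k => [|k IH]; first by rewrite addn0.
apply: le_trans IH; rewrite addnS sS -addrA lerD2l.
have hf := fact_gt0R (n + k).+1.
rewrite [(n + k).+2`!]factS natrM.
set f := ((n + k).+1`!)%:R : R in hf *.
have hm : 2 <= ((n + k).+2%:R : R) by rewrite ler_nat.
have hm0 : 0 < ((n + k).+2%:R : R) by rewrite ltr0n.
rewrite invfM mulrA.
have : 2 / (n + k).+2%:R <= (1 : R) by rewrite ler_pdivrMr // mul1r.
move=> h2.
have -> : 2 / f = f^-1 + f^-1 by rewrite mulr_natl mulr2n.
rewrite lerD2l -{2}(mul1r f^-1) ler_pM2r ?invr_gt0 //.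
Qed.

Lemma e_le n : e <= s n + 2 / (n.+1`!)%:R.
Proof.
rewrite /expR; apply: limr_le; first exact: is_cvg_series_exp_coeff.
apply: nearW => m.
have hm : (m <= (n + m).+1)%N by lia.
apply: le_trans; first exact: (ser_nd _ _ hm).
rewrite -s_ser; apply: le_trans (tail n m).
rewrite lerDl divr_ge0 // ltW //; exact: fact_gt0R.
Qed.

Lemma e_irr : irr R e.
Proof.
move=> p q q0; apply/eqP => h.
have [q' [p' [q'0 h']]] : exists (q' : nat) (p' : int), (0 < q')%N /\ e * q'%:R = p'%:~R.
  case: q q0 h => [qn|qn] q0 h.
    by exists qn, p; split => //; lia.
  exists qn.+1, (- p); split => //.
  by move: h; rewrite NegzE intrN mulrN => h; rewrite intrN -h opprK.
set n := q'.+1.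
have hdv : (q' %| n`!)%N by apply: dvdn_fact; rewrite q'0 leqnSn.
set M : int := ((n`! %/ q')%N)%:Z * p'.
have hM : e * (n`!)%:R = M%:~R.
  rewrite -(divnK hdv) natrM /M intrM -h'; ring.
set z : int := M - (Nn n)%:Z.
have hz : (n`!)%:R * (e - s n) = z%:~R.
  rewrite /z intrB -hM sN; field; rewrite gt_eqF // fact_gt0R.
have hf := fact_gt0R n.
have z0 : 0 < z%:~R :> R by rewrite -hz mulr_gt0 // subr_gt0 s_lt_e.
have z1 : z%:~R < 1 :> R.
  rewrite -hz; apply: (le_lt_trans (y := (n`!)%:R * (2 / (n.+1`!)%:R))).
    by rewrite ler_pM2l // lerBlDl; exact: e_le.
  rewrite factS natrM.
  have -> : (n`!)%:R * (2 / (n.+1%:R * (n`!)%:R)) = 2 / (n.+1%:R : R).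
    by field; rewrite !gt_eqF // ltr0n.
  by rewrite ltr_pdivrMr ?ltr0n // mul1r ltr_nat /n; lia.
move: z0 z1; rewrite ltr0z -[1]/(1%:~R) ltr_int; lia.
Qed.

End E.

Local Close Scope ring_scope.
Set Implicit Arguments. Unset Strict Implicit.

Definition Hc n q c := [/\ (0 < q)%N, (q == 1)%N || (0 < c)%N,
   (n`! %| Nn n * q)%N & (q * (q + c) * (n + 3) < (n + 2)`!)%N].

Lemma factD1 n : ((n + 1)`! = (n + 1) * n`!)%N.
Proof. by rewrite addn1 factS. Qed.

Lemma factD2 n : ((n + 2)`! = (n + 2) * (n + 1)`!)%N.
Proof. by rewrite -[2]/(1+1)%N addnA factD1. Qed.

Lemma H_sq n q c : Hc n q c -> (q * q < (n + 1)`!)%N.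
Proof.
case=> q0 _ _ h.
have h1 : (q * q * (n + 2) < (n + 1)`! * (n + 2))%N.
  rewrite (_ : (n + 1)`! * (n + 2) = (n + 2)`!)%N; last by rewrite factD2 mulnC.
  apply: leq_ltn_trans h; apply: leq_mul; first by rewrite leq_mul2l leq_addr orbT.
  by rewrite leq_add2l.
by rewrite ltn_pmul2r ?addn_gt0 ?orbT in h1.
Qed.

Lemma bad0 q c : ~ Hc 0 q c.
Proof. case=> q0 _ _; rewrite (_ : (0 + 2)`! = 2)%N //; nia. Qed.

Lemma bad2 q c : ~ Hc 2 q c.
Proof.
case=> q0 hor /dvdnP [k hk] h.
rewrite (_ : Nn 2 = 5)%N // (_ : 2`! = 2)%N // in hk.
rewrite (_ : (2 + 2)`! = 24)%N // in h.
case/orP: hor => [/eqP q1|c0]; first by move: hk; rewrite q1; lia.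
have q2 : (2 <= q)%N by lia.
nia.
Qed.

Lemma bad4 q c : ~ Hc 4 q c.
Proof.
move=> H; have := H_sq H; case: H => q0 _ /dvdnP [k hk] _.
rewrite (_ : Nn 4 = 65)%N // (_ : 4`! = 24)%N // in hk.
rewrite (_ : (4 + 1)`! = 120)%N // => h.
have : (q <= 10)%N by nia.
lia.
Qed.

Lemma bad5 q c : ~ Hc 5 q c.
Proof.
move=> H; have := H_sq H; case: H => q0 _ /dvdnP [k hk] _.
rewrite (_ : Nn 5 = 326)%N // (_ : 5`! = 120)%N // in hk.
rewrite (_ : (5 + 1)`! = 720)%N // => h.
have : (q <= 26)%N by nia.
lia.
Qed.

Lemma bad7 q c : ~ Hc 7 q c.
Proof.
move=> H; have := H_sq H; case: H => q0 _ /dvdnP [k hk] _.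
rewrite (_ : Nn 7 = 137 * 100)%N // (_ : 7`! = 7 * 720)%N // in hk.
rewrite (_ : (7 + 1)`! = 56 * 720)%N // => h.
have : (q <= 201)%N by nia.
lia.
Qed.

Lemma H_g n q c : Hc n q c -> (n`! <= gcdn (Nn n) n`! * q)%N.
Proof.
case=> q0 _ hd _; apply: dvdn_leq.
  by rewrite muln_gt0 q0 gcdn_gt0 fact_gt0 orbT.
by rewrite muln_gcdl dvdn_gcd hd /= dvdn_mulr.
Qed.

Lemma H_step n q c : Hc n q c ->
  (n`! < gcdn (Nn n) n`! * gcdn (Nn n) n`! * (n + 1))%N.
Proof.
move=> H; have h1 := H_g H; have h2 := H_sq H; move: h1 h2.
rewrite factD1; set F := n`!; set g := gcdn _ _ => h1 h2.
have F0 : (0 < F)%N by exact: fact_gt0.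
have g0 : (0 < g)%N by rewrite gcdn_gt0 F0 orbT.
have h3 : (F * F <= g * g * (q * q))%N.
  by rewrite mulnACA; apply: leq_mul.
have h4 : (g * g * (q * q) < g * g * ((n + 1) * F))%N.
  by rewrite ltn_pmul2l ?muln_gt0 ?g0.
have h5 : (F * F < g * g * (n + 1) * F)%N.
  by rewrite -mulnA; exact: leq_ltn_trans h3 h4.
by rewrite ltn_pmul2r in h5.
Qed.

Lemma fact_big k : ((k + 11) ^ 3 * (k + 9) <= (k + 8)`!)%N.
Proof.
elim: k => [//|k IH].
rewrite addSn factS.
apply: leq_trans (leq_mul (leqnn (k + 8).+1) IH).
nia.
Qed.


Lemma fact_big' n : (8 <= n)%N -> ((n + 3) ^ 3 * (n + 1) <= n`!)%N.
Proof.
move=> h; rewrite -(subnK h); move: (n - 8) => k.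
by rewrite -!addnA; exact: fact_big.
Qed.

Lemma Nn_gt0 n : (0 < Nn n)%N.
Proof. by case: n => //= n; rewrite addn1. Qed.

Lemma NnS n : Nn n.+1 = (n.+1 * Nn n + 1)%N.
Proof. by []. Qed.

Lemma general n qa ca qb cb qc cc : (8 <= n)%N ->
  Hc n qa ca -> Hc n.+1 qb cb -> Hc n.+2 qc cc -> False.
Proof.
move=> n8 Ha Hb Hcc.
have s0 := H_step Ha; have s1 := H_step Hb; have s2 := H_step Hcc.
move: s0 s1 s2.
set N0 := Nn n; set N1 := Nn n.+1; set N2 := Nn n.+2.
set g0 := gcdn N0 _; set g1 := gcdn N1 _; set g2 := gcdn N2 _.
move=> s0 s1 s2.
have eN1 : N1 = (n.+1 * N0 + 1)%N by [].
have eN2 : N2 = (n.+2 * N1 + 1)%N by [].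
have cop01 : coprime N0 N1 by rewrite /coprime eN1 gcdnMDl gcdn1.
have cop12 : coprime N1 N2 by rewrite /coprime eN2 gcdnMDl gcdn1.
have cop1 : coprime n.+1 N1 by rewrite /coprime eN1 mulnC gcdnMDl gcdn1.
have cop2 : coprime n.+2 N2 by rewrite /coprime eN2 mulnC gcdnMDl gcdn1.
have d02 : (gcdn N0 N2 %| n + 3)%N.
  have -> : N2 = (n.+2 * n.+1 * N0 + (n + 3))%N by rewrite eN2 eN1; ring.
  by rewrite gcdnMDl dvdn_gcdr.
have g0N : (g0 %| N0)%N by exact: dvdn_gcdl.
have g1N : (g1 %| N1)%N by exact: dvdn_gcdl.
have g2N : (g2 %| N2)%N by exact: dvdn_gcdl.
have g0F : (g0 %| n`!)%N by exact: dvdn_gcdr.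
have g1F : (g1 %| n`!)%N.
  have : (g1 %| n.+1`!)%N by exact: dvdn_gcdr.
  rewrite factS Gauss_dvdr //; rewrite coprime_sym.
  exact: coprime_dvdr g1N cop1.
have g2F : (g2 %| n.+1`!)%N.
  have : (g2 %| n.+2`!)%N by exact: dvdn_gcdr.
  rewrite factS Gauss_dvdr //; rewrite coprime_sym.
  exact: coprime_dvdr g2N cop2.
have c01 : coprime g0 g1.
  by apply: coprime_dvdl g0N _; apply: coprime_dvdr g1N _.
have c21 : coprime g2 g1.
  by apply: coprime_dvdl g2N _; apply: coprime_dvdr g1N _; rewrite coprime_sym.
have GF : (g0 * g1 %| n.+1`!)%N.
  rewrite Gauss_dvd // factS !dvdn_mull //.
have gG : (gcdn (g0 * g1) g2 %| n + 3)%N.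
  rewrite gcdnC Gauss_gcdl // gcdnC; apply: dvdn_trans d02.
  by rewrite dvdn_gcd (dvdn_trans (dvdn_gcdl _ _) g0N) (dvdn_trans (dvdn_gcdr _ _) g2N).
have P : (g0 * g1 * g2 <= n.+1`! * (n + 3))%N.
  rewrite -muln_lcm_gcd; apply: leq_mul; apply: dvdn_leq => //.
  + exact: fact_gt0.
  + by rewrite dvdn_lcm GF g2F.
  + by rewrite addn_gt0 orbT.
have F0 : (0 < n`!)%N := fact_gt0 n.
have e1 : n.+1`! = (n.+1 * n`!)%N by rewrite factS.
have e2 : n.+2`! = (n.+2 * (n.+1 * n`!))%N by rewrite factS e1.
move: s0 s1 s2 P; rewrite e2 e1.
have := fact_big' n8.
set F := n`! in F0 *.
move=> big s0 s1 s2 P.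
have X1 := ltn_mul (ltn_mul s0 s1) s2.
have P2 := leq_mul P P.
have K0 : (0 < F * F * (n + 1) * (n + 1) * (n + 2))%N.
  by rewrite !muln_gt0 F0 !addn_gt0 !orbT.
have X2 : (F * (F * F * (n + 1) * (n + 1) * (n + 2)) <
    ((n + 3) ^ 3 * (n + 1)) * (F * F * (n + 1) * (n + 1) * (n + 2)))%N.
  have -> : (F * (F * F * (n + 1) * (n + 1) * (n + 2)) =
      F * (n.+1 * F) * (n.+2 * (n.+1 * F)))%N by ring.
  apply: (leq_trans X1).
  have -> : (g0 * g0 * (n + 1) * (g1 * g1 * (n.+1 + 1)) * (g2 * g2 * (n.+2 + 1)) =
     (g0 * g1 * g2) * (g0 * g1 * g2) * ((n + 1) * (n + 2) * (n + 3)))%N.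
    by ring.
  apply: (leq_trans (leq_mul P2 (leqnn _))).
  apply: eq_leq; ring.
rewrite ltn_pmul2r // in X2.
by move: big; rewrite leqNgt X2.
Qed.

Unset Implicit Arguments.
Local Open Scope ring_scope.

Lemma conv_nat (R : realType) n :
  is_convergent (expR 1 : R) (e_partial_sum n) -> exists q c, Hc n q c.
Proof.
move=> [k hk].
have [p [q [c [hconv hq hc hor hb]]]] := @conv_bound R (expR 1) (e_irr R) k.
case: q hconv hq hor hb => [qn|qn] hconv hq hor hb; last by [].
case: c hc hor hb => [cn|cn] hc hor hb; last by [].
exists qn, cn.
have qn0 : (0 < qn)%N by move: hq; rewrite lez_nat.
have qR : 0 < (qn%:R : R) by rewrite ltr0n.
have hF := fact_gt0R R n.
rewrite hconv sN in hk.
have hp : (p%:~R : R) = (Nn n)%:R * qn%:R / (n`!)%:R.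
  have : (p%:~R : R) = p%:~R / (qn%:~R) * qn%:R.
    by rewrite -mulrA mulVf ?mulr1 // gt_eqF.
  by move=> ->; rewrite -hk; field; rewrite gt_eqF.
have pn0 : 0 < (p%:~R : R).
  by rewrite hp !mulr_gt0 ?invr_gt0 ?ltr0n ?Nn_gt0 ?fact_gt0.
clear hconv; case: p hp pn0 hk hb => [pn|pn] hp pn0 hk hb; last first.
  by move: pn0; rewrite ltr0z.
split => //.
- apply/dvdnP; exists pn; apply/eqP; rewrite -(eqr_nat R) !natrM.
  by apply/eqP; rewrite -[pn%:R]/((Posz pn)%:~R) hp; field; rewrite gt_eqF.
- rewrite -hk -sN in hb.
  set A : R := (qn * (qn + cn))%:R.
  have hA : ((Posz qn * (Posz qn + Posz cn))%:~R : R) = A.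
    by rewrite intrM intrD /A natrM natrD.
  rewrite hA in hb.
  have A0 : 0 <= A by rewrite /A ler0n.
  have hF1 := fact_gt0R R n.+1.
  have e3 : ((n.+3)%:R / (n.+2`!)%:R : R) = (n.+1`!%:R)^-1 + (n.+2`!%:R)^-1.
    rewrite [n.+2`!]factS natrM; field.
    by apply/andP; split; rewrite gt_eqF //; have := ler0n R n; lra.
  have hd : ((n.+3)%:R / (n.+2`!)%:R : R) <= `|expR 1 - e_partial_sum n|.
    rewrite e3 ger0_norm ?subr_ge0 ?s_le_e //.
    have := s_le_e R n.+2; rewrite !sS => h; lra.
  have key : A * ((n.+3)%:R / (n.+2`!)%:R) < 1.
    apply: le_lt_trans hb; rewrite (mulrC A); exact: ler_wpM2r.
  have hF2 := fact_gt0R R n.+2.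
  have key2 : A * (n.+3)%:R < (n.+2`!)%:R.
    have -> : A * (n.+3)%:R = A * ((n.+3)%:R / (n.+2`!)%:R) * (n.+2`!)%:R.
      by field; rewrite gt_eqF.
    by rewrite -{3}(mul1r (n.+2`!)%:R) ltr_pM2r.
  by rewrite -(ltr_nat R) natrM addn3 addn2.
Qed.

Theorem theorem3p1 (R : realType) (n : nat) :
  ~ [/\ is_convergent (expR 1 : R) (e_partial_sum n),
        is_convergent (expR 1 : R) (e_partial_sum n.+1)
      & is_convergent (expR 1 : R) (e_partial_sum n.+2)].
Proof.
case=> /conv_nat [qa [ca Ha]] /conv_nat [qb [cb Hb]] /conv_nat [qc [cc Hcc]].
case: n Ha Hb Hcc => [|[|[|[|[|[|[|[|n]]]]]]]] Ha Hb Hcc.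
- exact: bad0 Ha.
- exact: bad2 Hb.
- exact: bad4 Hcc.
- exact: bad4 Hb.
- exact: bad4 Ha.
- exact: bad5 Ha.
- exact: bad7 Hb.
- exact: bad7 Ha.
- exact: general _ Ha Hb Hcc.
Qed.
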